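(* If $G$ is a conference graph on $n$ vertices, then $\chi_v(\overline{G})=\chi_v(G)=\sqrt{n}=\chi_{sv}(G)=\chi_{sv}(\overline{G})$.
   Context: A conference graph on $n$ vertices ($n\ge5$) is a strongly regular graph with parameters $(n,\tfrac12(n-1),\tfrac14(n-5),\tfrac14(n-1))$, i.e. a $\tfrac12(n-1)$-regular graph on $n$ vertices in which adjacent vertices have exactly $\tfrac14(n-5)$ and distinct nonadjacent vertices exactly $\tfrac14(n-1)$ common neighbours; $\overline{G}$ is the complement. For a graph on $n$ vertices with at least one edge, a vector $t$-coloring ($t\ge2$) assigns unit vectors $u_i\in\mathbb R^n$ to vertices with $u_i^{\mathrm T}u_j\le-\frac1{t-1}$ for every edge $\{i,j\}$, and a strict vector $t$-coloring requires equality on every edge; $\chi_v$ and $\chi_{sv}$ are the smallest $t\ge2$ admitting a vector, resp. strict vector, $t$-coloring. *)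

(* Defs.v *)
From HB Require Import structures.
From mathcomp Require Import all_boot all_order all_algebra.
From mathcomp Require Import reals.
Set Implicit Arguments. Unset Strict Implicit. Unset Printing Implicit Defensive.
Import Order.TTheory GRing.Theory Num.Theory.
Local Open Scope ring_scope.

Definition simple_graph (n : nat) (e : rel 'I_n) : Prop :=
  symmetric e /\ irreflexive e.

Definition compl_graph (n : nat) (e : rel 'I_n) : rel 'I_n :=
  fun u v => (u != v) && ~~ e u v.

Definition has_edge (n : nat) (e : rel 'I_n) : Prop := exists u v, e u v.

Definition common_nbrs (n : nat) (e : rel 'I_n) (u v : 'I_n) : nat :=
  #|[set w | e u w && e v w]|.

Definition degree (n : nat) (e : rel 'I_n) (v : 'I_n) : nat :=
  #|[set w | e v w]|.

Definition srg (n : nat) (e : rel 'I_n) (k lam mu : nat) : Prop :=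
  simple_graph e /\
  (forall v, degree e v = k) /\
  (forall u v, u != v -> e u v -> common_nbrs e u v = lam) /\
  (forall u v, u != v -> ~~ e u v -> common_nbrs e u v = mu).

Definition conference_graph (n : nat) (e : rel 'I_n) : Prop :=
  (5 <= n)%N /\
  exists k lam mu : nat,
    [/\ (2 * k = n - 1)%N, (4 * lam = n - 5)%N, (4 * mu = n - 1)%N
      & srg e k lam mu].

Definition dotv (R : realType) (n : nat) (u v : 'rV[R]_n) : R :=
  \sum_(k < n) u 0 k * v 0 k.

Definition vector_coloring (R : realType) (n : nat) (e : rel 'I_n) (t : R) : Prop :=
  exists u : 'I_n -> 'rV[R]_n,
    (forall i, dotv (u i) (u i) = 1) /\
    (forall i j, e i j -> dotv (u i) (u j) <= - (t - 1)^-1).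

Definition strict_vector_coloring (R : realType) (n : nat) (e : rel 'I_n) (t : R) : Prop :=
  exists u : 'I_n -> 'rV[R]_n,
    (forall i, dotv (u i) (u i) = 1) /\
    (forall i j, e i j -> dotv (u i) (u j) = - (t - 1)^-1).

Definition is_vector_chromatic_number (R : realType) (n : nat) (e : rel 'I_n) (x : R) : Prop :=
  [/\ 2 <= x, vector_coloring e x
    & forall t : R, 2 <= t -> vector_coloring e t -> x <= t].

Definition is_strict_vector_chromatic_number (R : realType) (n : nat) (e : rel 'I_n) (x : R) : Prop :=
  [/\ 2 <= x, strict_vector_coloring e x
    & forall t : R, 2 <= t -> strict_vector_coloring e t -> x <= t].

(* Main.v *)
Require Import Defs.
From HB Require Import structures.
From mathcomp Require Import all_boot all_order all_algebra.
From mathcomp Require Import reals.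
From mathcomp Require Import ring lra zify.
Import Order.TTheory GRing.Theory Num.Theory.
Local Open Scope ring_scope.

Definition Jm (R : realType) n : 'M[R]_n := const_mx 1.
Definition adj (R : realType) n (e : rel 'I_n) : 'M[R]_n := \matrix_(i, j) (e i j)%:R.
Arguments adj R {n} e.

Lemma psd_tr (R : realType) n (X U : 'M[R]_n) : 0 <= \tr (X *m X^T *m (U *m U^T)).
Proof.
rewrite -mulmxA mxtrace_mulC -!mulmxA mulmxA.
have -> : U^T *m X = (X^T *m U)^T by rewrite trmx_mul trmxK.
rewrite /mxtrace; apply: sumr_ge0 => i _; rewrite !mxE.
apply: sumr_ge0 => j _; rewrite !mxE -expr2; exact: sqr_ge0.
Qed.

Lemma trL (R : realType) n (A G : 'M[R]_n) a b c :
  \tr ((a%:M + b *: A + c *: Jm R n) *m G) = a * \tr G + b * \tr (A *m G) + c * \tr (Jm R n *m G).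
Proof.
by rewrite !mulmxDl mul_scalar_mx -!scalemxAl !mxtraceD !mxtraceZ.
Qed.

Lemma trTL (R : realType) n (A : 'M[R]_n) a b c : A^T = A ->
  (a%:M + b *: A + c *: Jm R n)^T = a%:M + b *: A + c *: Jm R n.
Proof.
by move=> hA; rewrite !linearD !linearZ /= tr_scalar_mx hA trmx_const.
Qed.
Lemma JJ (R : realType) n : Jm R n *m Jm R n = n%:R *: Jm R n.
Proof.
apply/matrixP=> i j; rewrite !mxE.
under eq_bigr do rewrite !mxE mulr1.
by rewrite sumr_const card_ord mulr1.
Qed.

Lemma Lmul (R : realType) n (A : 'M[R]_n) mu k a1 b1 c1 a2 b2 c2 :
  A *m A = mu *: (1%:M + Jm R n) - A -> A *m Jm R n = k *: Jm R n ->
  Jm R n *m A = k *: Jm R n ->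
  (a1%:M + b1 *: A + c1 *: Jm R n) *m (a2%:M + b2 *: A + c2 *: Jm R n) =
  (a1*a2 + b1*b2*mu)%:M + (a1*b2 + b1*a2 - b1*b2) *: A
   + (a1*c2 + c1*a2 + b1*b2*mu + (b1*c2 + c1*b2)*k + c1*c2*n%:R) *: Jm R n.
Proof.
move=> hAA hAJ hJA.
have hJJ : Jm R n *m Jm R n = n%:R *: Jm R n.
  apply/matrixP=> i j; rewrite !mxE.
  under eq_bigr do rewrite !mxE mulr1.
  by rewrite sumr_const card_ord mulr1.
rewrite !mulmxDl !mulmxDr !mul_scalar_mx !mul_mx_scalar -!scalemxAl -!scalemxAr.
rewrite hAA hAJ hJA hJJ.
apply/matrixP=> i j; rewrite !mxE.
by case: (i == j) => /=; rewrite ?mulr1n ?mulr0n; ring.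
Qed.

Lemma LZ (R : realType) n (A : 'M[R]_n) s a b c :
  s *: (a%:M + b *: A + c *: Jm R n) = (s*a)%:M + (s*b) *: A + (s*c) *: Jm R n.
Proof. by rewrite !scalerDr !scalerA scale_scalar_mx. Qed.

Lemma Gram (R : realType) n (u : 'I_n -> 'rV[R]_n) i j :
  ((\matrix_(i, j) u i 0 j) *m (\matrix_(i, j) u i 0 j)^T) i j = dotv (u i) (u j).
Proof. rewrite !mxE /dotv; apply: eq_bigr => k _; by rewrite !mxE. Qed.

Lemma lower (R : realType) n (e : rel 'I_n) (k mu s t : R) :
  symmetric e -> 0 < s -> s ^+ 2 = n%:R -> 2 * k = n%:R - 1 -> 4 * mu = n%:R - 1 ->
  adj R e *m adj R e = mu *: (1%:M + Jm R n) - adj R e ->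
  adj R e *m Jm R n = k *: Jm R n -> Jm R n *m adj R e = k *: Jm R n ->
  2 <= t -> vector_coloring e t -> s <= t.
Proof.
move=> esym s0 sn hk hmu hAA hAJ hJA t2 [u [hu hedge]].
set A := adj R e; set J := Jm R n.
have At : A^T = A by apply/matrixP=> i j; rewrite !mxE esym.
set U := \matrix_(i, j) u i 0 j; set G := U *m U^T.
have n0 : 0 < (n%:R : R) by rewrite -sn exprn_gt0.
have trG : \tr G = n%:R.
  rewrite /mxtrace; under eq_bigr do rewrite Gram hu.
  by rewrite sumr_const card_ord.
set h := (1 + s) / 2; set c := (s + 1) / (2 * s).
set P := h%:M + 1 *: A + (- c) *: J.
have hPP : P *m P = s *: P.
  rewrite /P (Lmul _ _ _ _ _ _ _ _ _ _ _ hAA hAJ hJA) LZ.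
  have s2 : s != 0 by rewrite gt_eqF.
  have ek : k = (s^+2 - 1) / 2 by rewrite sn -hk; field.
  have em : mu = (s^+2 - 1) / 4 by rewrite sn -hmu; field.
  rewrite ek em -sn.
  congr (_%:M + _ *: _ + _ *: _); rewrite /h /c; field => //.
have trPG : 0 <= \tr (P *m G).
  have -> : P = s^-1 *: (P *m P^T).
    by rewrite trTL // hPP scalerA mulVf ?gt_eqF // scale1r.
  rewrite -scalemxAl mxtraceZ; apply: mulr_ge0; [by rewrite invr_ge0 ltW | exact: psd_tr].
have trJG : 0 <= \tr (J *m G).
  have -> : J = (n%:R)^-1 *: (J *m J^T).
    rewrite /J trmx_const.
    by rewrite JJ scalerA mulVf ?gt_eqF // scale1r.
  rewrite -scalemxAl mxtraceZ; apply: mulr_ge0; [by rewrite invr_ge0 ltW | exact: psd_tr].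
have := trPG; rewrite /P trL trG mul1r => H1.
set T := \tr (A *m G).
have hT : T <= n%:R * (k * (- (t - 1)^-1)).
  rewrite (_ : n%:R * _ = \sum_(i < n) (k * - (t - 1)^-1)); last first.
    by rewrite sumr_const card_ord mulr_natl.
  rewrite /T /mxtrace; apply: ler_sum => i _.
  rewrite mxE.
  have -> : k = \sum_j A i j.
    have := congr1 (fun M : 'M[R]_n => M i i) hAJ; rewrite !mxE => Hk.
    rewrite -[k]mulr1 -Hk.
    by apply: eq_bigr => j _; rewrite !mxE !mulr1.
  rewrite mulr_suml; apply: ler_sum => j _.
  rewrite /A /G Gram !mxE; case: (boolP (e i j)) => hij /=.
    by rewrite !mul1r hedge // esym.
  by rewrite !mul0r.
have c0 : 0 <= c by rewrite /c divr_ge0 // ?mulr_ge0 ?ltW // addr_gt0.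
have cJ : 0 <= c * \tr (J *m G) by apply: mulr_ge0.
set x := (t - 1)^-1.
have d0 : 0 < t - 1 by lra.
have xd : x * (t - 1) = 1 by rewrite /x mulVf // gt_eqF.
have H2 : 0 <= n%:R * (h - k * x).
  move: H1 hT cJ; rewrite /T /x /J; lra.
have H3 : 0 <= h - k * x by rewrite pmulr_rge0 in H2.
have H4 : 0 <= h * (t - 1) - k.
  have : 0 <= (h - k * x) * (t - 1) by rewrite mulr_ge0 // ltW.
  by rewrite mulrBl -[k * x * _]mulrA xd mulr1.
have ek : k = (s^+2 - 1) / 2 by rewrite sn -hk; field.
rewrite ek /h in H4.
have H5 : 0 <= (1 + s) * (t - s) by nra.
rewrite pmulr_rge0 in H5; [lra | lra].
Qed.

Lemma dotrow (R : realType) n (U : 'M[R]_n) i j :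
  dotv (row i U) (row j U) = (U *m U^T) i j.
Proof. rewrite /dotv !mxE; apply: eq_bigr => k _; by rewrite !mxE. Qed.

Lemma upper (R : realType) n (e : rel 'I_n) (k mu s : R) :
  symmetric e -> irreflexive e -> 1 < s -> s ^+ 2 = n%:R -> 2 * k = n%:R - 1 -> 4 * mu = n%:R - 1 ->
  adj R e *m adj R e = mu *: (1%:M + Jm R n) - adj R e ->
  adj R e *m Jm R n = k *: Jm R n -> Jm R n *m adj R e = k *: Jm R n ->
  strict_vector_coloring e s.
Proof.
move=> esym eirr s1 sn hk hmu hAA hAJ hJA.
set A := adj R e; set J := Jm R n.
have At : A^T = A by apply/matrixP=> i j; rewrite !mxE esym.
set a := - (s - 1)^-1; set b := (s + 1)^-1.
set M := (1 - b)%:M + (a - b) *: A + b *: J.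
set m := 2 * s^+2 / (s^+2 - 1).
have m0 : 0 < m.
  rewrite /m divr_gt0 // ?mulr_gt0 ?exprn_gt0 //; try lra.
  by rewrite subr_gt0 exprn_egt1 //; lra.
have hMM : M *m M = m *: M.
  rewrite /M (Lmul _ _ _ _ _ _ _ _ _ _ _ hAA hAJ hJA) LZ.
  have s2 : s - 1 != 0 by rewrite subr_eq0 gt_eqF.
  have s3 : s + 1 != 0 by rewrite gt_eqF //; lra.
  have s4 : s^+2 - 1 != 0 by rewrite subr_eq0 gt_eqF // exprn_egt1 //; lra.
  have ek : k = (s^+2 - 1) / 2 by rewrite sn -hk; field.
  have em : mu = (s^+2 - 1) / 4 by rewrite sn -hmu; field.
  rewrite ek em -sn.
  congr (_%:M + _ *: _ + _ *: _); rewrite /a /b /m; field; rewrite s2 s3 s4 //.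
have Mt : M^T = M by rewrite trTL.
set U := (Num.sqrt m)^-1 *: M.
have UU : U *m U^T = M.
  rewrite /U linearZ /= Mt -scalemxAl -scalemxAr hMM !scalerA.
  have sq0 : Num.sqrt m != 0 by rewrite gt_eqF // sqrtr_gt0.
  rewrite -[m in _ * m *: _](@sqr_sqrtr _ m) ?ltW // expr2.
  have -> : (Num.sqrt m)^-1 / Num.sqrt m * (Num.sqrt m * Num.sqrt m) = 1 by field.
  by rewrite scale1r.
exists (fun i => row i U); split.
  move=> i; rewrite dotrow UU !mxE eqxx eirr /=; rewrite mulr1n mulr0; ring.
move=> i j hij.
have nij : (i == j) = false by apply/eqP => ij; move: hij; rewrite ij eirr.
rewrite dotrow UU !mxE nij hij /= /a; ring.
Qed.

Lemma strict_vc (R : realType) n (e : rel 'I_n) (t : R) :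
  strict_vector_coloring e t -> vector_coloring e t.
Proof. by move=> [u [h1 h2]]; exists u; split=> // i j /h2 ->. Qed.

Lemma both (R : realType) n (e : rel 'I_n) (k mu : R) :
  symmetric e -> irreflexive e -> (5 <= n)%N -> 2 * k = n%:R - 1 -> 4 * mu = n%:R - 1 ->
  adj R e *m adj R e = mu *: (1%:M + Jm R n) - adj R e ->
  adj R e *m Jm R n = k *: Jm R n -> Jm R n *m adj R e = k *: Jm R n ->
  is_vector_chromatic_number e (Num.sqrt (n%:R : R)) /\
  is_strict_vector_chromatic_number e (Num.sqrt (n%:R : R)).
Proof.
move=> esym eirr n5 hk hmu hAA hAJ hJA.
have n5' : (5 : R) <= n%:R by rewrite (ler_nat R 5 n).
have sn : Num.sqrt (n%:R : R) ^+ 2 = n%:R by rewrite sqr_sqrtr // ler0n.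
have s0 := sqrtr_ge0 (n%:R : R).
set s := Num.sqrt (n%:R : R) in sn s0 *.
have s2 : 2 <= s by rewrite expr2 in sn; nra.
have s1 : 1 < s by lra.
have hs : strict_vector_coloring e s by exact: (upper _ _ _ _ _ _ esym eirr s1 sn hk hmu hAA hAJ hJA).
have lo : forall t, 2 <= t -> vector_coloring e t -> s <= t.
  move=> t t2 ht; apply: (lower _ _ _ _ _ _ _ esym _ sn hk hmu hAA hAJ hJA t2 ht); lra.
split; split => //.
- exact: strict_vc.
- by move=> t t2 /strict_vc; apply: lo.
Qed.

Lemma sum_ind (R : realType) n (p : pred 'I_n) :
  \sum_w ((p w)%:R : R) = (#|[set w | p w]|)%:R.
Proof.
rewrite -sum1dep_card natr_sum [RHS]big_mkcond /=; apply: eq_bigr => w _; by case: (p w).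
Qed.

Theorem mainTheorem11 (R : realType) (n : nat) (e : rel 'I_n) :
  conference_graph e ->
  [/\ is_vector_chromatic_number (compl_graph e) (Num.sqrt (n%:R : R)),
      is_vector_chromatic_number e (Num.sqrt (n%:R : R)),
      is_strict_vector_chromatic_number e (Num.sqrt (n%:R : R))
    & is_strict_vector_chromatic_number (compl_graph e) (Num.sqrt (n%:R : R))].
Proof.
move=> [n5 [k [lam [mu [hk hlam hmu [[esym eirr] [hdeg [hadj hnadj]]]]]]]].
have hkR : 2 * (k%:R : R) = n%:R - 1.
  by rewrite -natrM hk natrB ?(leq_trans _ n5).
have hmuR : 4 * (mu%:R : R) = n%:R - 1.
  by rewrite -natrM hmu natrB ?(leq_trans _ n5).
have k2mu : k = (2 * mu)%N by lia.
have lammu : mu = lam.+1 by lia.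
set A := adj R e; set J := Jm R n.
have hAA : A *m A = (mu%:R : R) *: (1%:M + J) - A.
  apply/matrixP=> i j; rewrite !mxE.
  under eq_bigr do rewrite /A !mxE -natrM mulnb (esym _ j).
  rewrite sum_ind.
  case: (eqVneq i j) => [<-|nij].
    have -> : [set w | e i w & e i w] = [set w | e i w] by apply/setP => w; rewrite !inE andbb.
    move: (hdeg i); rewrite /degree => ->.
    by rewrite eirr /= k2mu natrM; ring.
  have lmR : (mu%:R : R) = lam%:R + 1 by rewrite lammu -addn1 natrD.
  rewrite /=.
  case eij: (e i j).
    by move: (hadj i j nij eij); rewrite /common_nbrs => ->; rewrite lmR /=; ring.
  by move: (hnadj i j nij (negbT eij)); rewrite /common_nbrs => ->; rewrite /=; ring.
have hAJ : A *m J = (k%:R : R) *: J.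
  apply/matrixP=> i j; rewrite !mxE.
  under eq_bigr do rewrite /A /J !mxE mulr1.
  by rewrite sum_ind; move: (hdeg i); rewrite /degree => ->; rewrite mulr1.
have At : A^T = A by apply/matrixP=> i j; rewrite !mxE esym.
have hJA : J *m A = (k%:R : R) *: J.
  by rewrite -At -[J]trmx_const -trmx_mul hAJ linearZ /= trmx_const.
have [H1 H2] := both _ _ _ _ _ esym eirr n5 hkR hmuR hAA hAJ hJA.
set B := adj R (compl_graph e).
have Bsym : symmetric (compl_graph e).
  by move=> i j; rewrite /compl_graph eq_sym esym.
have Birr : irreflexive (compl_graph e) by move=> i; rewrite /compl_graph eqxx.
have hB : B = (-1)%:M + (-1) *: A + 1 *: J.
  apply/matrixP=> i j; rewrite !mxE /compl_graph.
  case: (eqVneq i j) => [<-|nij]; rewrite ?eirr /= ?mulr1n ?mulr0n; first ring.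
  by case: (e i j); rewrite /= ?mulr1n ?mulr0n; ring.
have ek : (k%:R : R) = (n%:R - 1) / 2 by rewrite -hkR; field.
have em : (mu%:R : R) = (n%:R - 1) / 4 by rewrite -hmuR; field.
have hBB : B *m B = (mu%:R : R) *: (1%:M + J) - B.
  rewrite hB (Lmul _ _ _ _ _ _ _ _ _ _ _ hAA hAJ hJA).
  apply/matrixP=> i j; rewrite !mxE ek em.
  by case: (i == j); rewrite /= ?mulr1n ?mulr0n; lra.
have hBJ : B *m J = (k%:R : R) *: J.
  have -> : J = 0%:M + 0 *: A + 1 *: J.
    by apply/matrixP=> i j; rewrite !mxE; case: (i == j); rewrite /= ?mulr1n ?mulr0n; ring.
  rewrite hB (Lmul _ _ _ _ _ _ _ _ _ _ _ hAA hAJ hJA).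
  apply/matrixP=> i j; rewrite !mxE ek.
  by case: (i == j); rewrite /= ?mulr1n ?mulr0n; lra.
have Bt : B^T = B by apply/matrixP=> i j; rewrite !mxE Bsym.
have hJB : J *m B = (k%:R : R) *: J.
  by rewrite -Bt -[J]trmx_const -trmx_mul hBJ linearZ /= trmx_const.
have [H3 H4] := both _ _ _ _ _ Bsym Birr n5 hkR hmuR hBB hBJ hJB.
by split.
Qed.
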